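(* Let $X=\{(u,v)\in\mathbb{R}^2:uv>0\}\cup\{\theta\}$ with $\theta=(0,0)$, equipped with the relative Euclidean topology $\tau$ and the coordinatewise partial order $\preceq$. Then $(X,\tau,\preceq)$ is a partially ordered topological space, and: (a) $\theta$ is neither a $\preceq$-upper singular point nor a $\preceq$-upper compact bounded point; (b) the map $x^\downarrow\mapsto x$ from $(C^\downarrow(X),\tau_F)$ to $(X,\tau)$ is not continuous at $\theta^\downarrow$.
   Context: A partially ordered topological space is a topological space with a partial order whose graph is closed in $X\times X$. $x^\downarrow=\{u\in X:u\preceq x\}$, $x^\uparrow=\{u\in X:x\preceq u\}$ (taken inside $X$). $C(X)$ = closed subsets of $X$, $C^\downarrow(X)=\{x^\downarrow:x\in X\}$; the Fell topology $\tau_F$ on $C(X)$ is generated by the sets $\{A:A\cap O\neq\emptyset\}$ ($O$ open) and $\{A:A\cap D=\emptyset\}$ ($D$ compact), and $C^\downarrow(X)$ carries the relative topology. $x$ is a $\preceq$-upper singular point if for every open neighborhood $O$ of $x$ there is an open neighborhood $O_1\subseteq O$ of $x$ with no $y\in X\setminus O_1$ satisfying $u\preceq y$ for some $u\in O_1$. $x$ is a $\preceq$-upper compact bounded point if for every open neighborhood $O$ of $x$ there are $a,b\in O$, $b\preceq a$, with $b^\uparrow\cap a^\downarrow\subseteq O$, $x\in\mathrm{int}(b^\uparrow\cap a^\downarrow)$, and $(b^\uparrow\cap a^\downarrow)\setminus\mathrm{int}\,a^\downarrow$ nonempty and compact. *)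

(* Defs.v *)
From HB Require Import structures.
From mathcomp Require Import all_boot all_order all_algebra.
From mathcomp Require Import all_classical all_reals all_analysis.
Set Implicit Arguments. Unset Strict Implicit. Unset Printing Implicit Defensive.
Import Order.TTheory GRing.Theory Num.Theory.
Import numFieldNormedType.Exports.
Local Open Scope classical_set_scope.
Local Open Scope ring_scope.

Section General.
Context {X : topologicalType} (le : X -> X -> Prop).

Definition is_partial_order : Prop :=
  [/\ (forall x, le x x),
      (forall x y, le x y -> le y x -> x = y) &
      (forall x y z, le x y -> le y z -> le x z)].

Definition pots : Prop :=
  is_partial_order /\ closed [set p : X * X | le p.1 p.2].

Definition down (x : X) : set X := [set u | le u x].
Definition up (x : X) : set X := [set u | le x u].

Definition CX : set (set X) := [set A | closed A].
Definition Cdown : set (set X) := [set A | exists x, A = down x].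

(** Fell topology on C(X): topology generated by the subbasic sets
    {A : A meets O} (O open) and {A : A misses D} (D compact). *)
Definition fell_basic (Os Ds : seq (set X)) : set (set X) :=
  [set A | CX A /\
     (forall O, O \in Os -> A `&` O !=set0) /\
     (forall D, D \in Ds -> A `&` D = set0)].

Definition fell_open (W : set (set X)) : Prop :=
  W `<=` CX /\
  forall A, W A -> exists Os Ds : seq (set X),
    (forall O, O \in Os -> open O) /\ (forall D, D \in Ds -> compact D) /\
    fell_basic Os Ds A /\ fell_basic Os Ds `<=` W.

(** continuity at x0^down of the map x^down |-> x from (C^down(X), tau_F)
    (relative Fell topology) to (X, tau) *)
Definition down_inv_continuous_at (x0 : X) : Prop :=
  forall O : set X, open O -> O x0 ->
    exists W : set (set X), fell_open W /\ W (down x0) /\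
      (forall x, W (down x) -> O x).

Definition upper_singular (x : X) : Prop :=
  forall O : set X, open O -> O x ->
    exists O1 : set X, [/\ open O1, O1 x, O1 `<=` O &
      ~ (exists y u, ~ O1 y /\ O1 u /\ le u y)].

Definition upper_compact_bounded (x : X) : Prop :=
  forall O : set X, open O -> O x ->
    exists a b : X, [/\ O a, O b, le b a,
      up b `&` down a `<=` O &
      [/\ (up b `&` down a)° x,
          (up b `&` down a) `\` (down a)° !=set0 &
          compact ((up b `&` down a) `\` (down a)°)]].
End General.

Definition Xset (R : realType) : set (R * R) :=
  [set p | 0 < p.1 * p.2] `|` [set (0, 0)].

(** X with the relative Euclidean topology (subtype/initial topology). *)
Notation Xsp R := (set_type (@Xset R)).

Lemma theta_in (R : realType) : ((0 : R), (0 : R)) \in @Xset R.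
Proof. by apply/mem_set; right. Qed.

Definition theta (R : realType) : Xsp R := exist _ ((0 : R), (0 : R)) (@theta_in R).

Definition coord_le (R : realType) (x y : Xsp R) : Prop :=
  (sval x).1 <= (sval y).1 /\ (sval x).2 <= (sval y).2.

(* Main.v *)
Require Import Defs.
From HB Require Import structures.
From mathcomp Require Import all_boot all_order all_algebra.
From mathcomp Require Import all_classical all_reals all_analysis.
From mathcomp Require Import lra.
Import Order.TTheory GRing.Theory Num.Theory.
Import numFieldNormedType.Exports.
Local Open Scope classical_set_scope.
Local Open Scope ring_scope.
Section S.
Variable R : realType.
Implicit Types z w : Xsp R.

Lemma sval_cont : continuous (fun z : Xsp R => sval z).
Proof. exact: initial_continuous. Qed.

Lemma open_pre {A : set (R * R)} : open A -> open ((fun z : Xsp R => sval z) @^-1` A).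
Proof. move=> oA; apply: open_comp => //= z _; exact: sval_cont. Qed.

Lemma fst_cont : continuous (@fst R R).
Proof. move=> x; exact: cvg_fst. Qed.
Lemma snd_cont : continuous (@snd R R).
Proof. move=> x; exact: cvg_snd. Qed.

Lemma open_fst_lt c : open [set p : R * R | p.1 < c].
Proof. apply: (@open_comp _ _ fst [set x | x < c]); [move=> *; exact: fst_cont| exact: open_lt]. Qed.
Lemma open_snd_lt c : open [set p : R * R | p.2 < c].
Proof. apply: (@open_comp _ _ snd [set x | x < c]); [move=> *; exact: snd_cont| exact: open_lt]. Qed.
Lemma open_fst_gt c : open [set p : R * R | c < p.1].
Proof. apply: (@open_comp _ _ fst [set x | c < x]); [move=> *; exact: fst_cont| exact: open_gt]. Qed.
Lemma open_snd_gt c : open [set p : R * R | c < p.2].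
Proof. apply: (@open_comp _ _ snd [set x | c < x]); [move=> *; exact: snd_cont| exact: open_gt]. Qed.


Lemma nbhs_pull {z} {U : set (Xsp R)} : nbhs z U ->
  exists V : set (R * R), nbhs (sval z) V /\ forall w, V (sval w) -> U w.
Proof.
case=> _ /= [[W oW <-] Wx sWU]; exists W; split.
  by apply: open_nbhs_nbhs; split.
by move=> w Ww; apply: sWU.
Qed.

Lemma nbhs_R_pos {x : R} {A : set R} : nbhs x A ->
  exists e, 0 < e /\ A (x + e) /\ A (x - e).
Proof.
move=> /nbhs_ballP [e e0 He]; exists (e / 2); split; first by rewrite divr_gt0.
have e2 : 0 < e / 2 by rewrite divr_gt0.
split; apply: He; rewrite /ball /=.
  rewrite opprD addrA subrr sub0r normrN ger0_norm; lra.
rewrite opprB.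
rewrite addrC -addrA addNr addr0 ger0_norm; lra.
Qed.

Lemma cover_pos (i : R * R -> R) (K : set (Xsp R)) :
  (forall c, open [set p | c < i p]) -> compact K ->
  (forall x, K x -> 0 < i (sval x)) ->
  exists r, 0 < r /\ forall w, K w -> r < i (sval w).
Proof.
move=> oi /compact_near_coveringP cK Kpos.
have H : \forall r \near (0 : R)^'+, K `<=` (fun w => r < i (sval w)).
  apply: cK => x Kx.
  have c0 := Kpos x Kx; set c := i (sval x) in c0 *.
  exists ([set w | c / 2 < i (sval w)], [set r | r < c / 2]).
  - split => /=.
      apply: open_nbhs_nbhs; split; first exact: (open_pre (oi (c / 2))).
      rewrite /= -/c; lra.
    apply: nbhs_right_lt; lra.
  - by move=> [w r] /= [h1 h2]; lra.
have [r [r0 Hr]] := filter_ex (filterI (nbhs_right_gt (0:R)) H).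
by exists r; split.
Unshelve. all: end_near.
Qed.

Definition ptX {p : R * R} (h : 0 < p.1 * p.2) : Xsp R :=
  exist _ p (mem_set (or_introl h : Xset p)).

Lemma Xspec z : 0 < (sval z).1 * (sval z).2 \/ ((sval z).1 = 0 /\ (sval z).2 = 0).
Proof.
case: z => [[u v] /= /set_mem [h|h]]; [by left|right].
by case: h => -> ->.
Qed.

Lemma min2 {x y : R} : 0 < x -> 0 < y -> exists t, [/\ 0 < t, t <= x & t <= y].
Proof. by move=> x0 y0; have [h|h] := leP x y; [exists x|exists y]; split => //; lra. Qed.

Lemma closed_fst_le c : closed [set p : R * R | p.1 <= c].
Proof. apply: (@preimage_closed _ _ fst [set x | x <= c]); [move=> *; exact: fst_cont| exact: closed_le]. Qed.
Lemma closed_snd_le c : closed [set p : R * R | p.2 <= c].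
Proof. apply: (@preimage_closed _ _ snd [set x | x <= c]); [move=> *; exact: snd_cont| exact: closed_le]. Qed.

Lemma closed_down x : closed (Defs.down (@coord_le R) x).
Proof.
have -> : Defs.down (@coord_le R) x = (fun z : Xsp R => sval z) @^-1`
   ([set p : R * R | p.1 <= (sval x).1] `&` [set p | p.2 <= (sval x).2]).
  by apply/seteqP; split => z.
apply: preimage_closed; first by move=> *; exact: sval_cont.
apply: closedI; [exact: closed_fst_le | exact: closed_snd_le].
Qed.

Lemma pots_coord : pots (@coord_le R).
Proof.
split.
  split.
  - by move=> x; split.
  - move=> [[a b] ha] [[c d] hc] /= [h1 h2] [h3 h4]; apply: (eq_sig_hprop (fun _ _ _ => Prop_irrelevance _ _)) => /=.
    by congr pair; apply/eqP; rewrite eq_le ?h1 ?h2 ?h3 ?h4.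
  - move=> x y z [h1 h2] [h3 h4]; split; [exact: le_trans h1 h3|exact: le_trans h2 h4].
have cf : forall (g : R * R -> R), continuous g ->
    continuous (fun p : Xsp R * Xsp R => g (sval p.2) - g (sval p.1)).
  move=> g cg p; apply: continuousB.
    exact: (continuous_comp (continuous_comp cvg_snd (sval_cont _)) (cg _)).
  exact: (continuous_comp (continuous_comp cvg_fst (sval_cont _)) (cg _)).
have -> : [set p : Xsp R * Xsp R | coord_le p.1 p.2] =
  (fun p : Xsp R * Xsp R => (sval p.2).1 - (sval p.1).1) @^-1` [set x | 0 <= x] `&`
  (fun p : Xsp R * Xsp R => (sval p.2).2 - (sval p.1).2) @^-1` [set x | 0 <= x].
  apply/seteqP; split => p /=; rewrite /coord_le !subr_ge0 //.
apply: closedI; apply: preimage_closed; try exact: closed_ge.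
  by move=> p _; apply: (cf fst fst_cont).
by move=> p _; apply: (cf snd snd_cont).
Qed.

Lemma theta_val : sval (theta R) = (0, 0). Proof. by []. Qed.

Lemma not_singular : ~ upper_singular (@coord_le R) (theta R).
Proof.
have oO := open_pre (open_fst_lt 1).
move=> /(_ _ oO) [] /=; first lra.
move=> O1 [oO1 O1t O1O]; apply.
have h : 0 < ((2 : R), (2 : R)).1 * ((2 : R), (2 : R)).2 by rewrite /=; lra.
exists (ptX h), (theta R); split => //.
- by move=> /O1O /=; lra.

Qed.

Lemma not_ucb : ~ upper_compact_bounded (@coord_le R) (theta R).
Proof.
move=> /(_ setT openT I) [a [b [_ _ ba sub [intx _ cpt]]]].
have [V [nV HV]] := nbhs_pull intx.
case: nV => [[P Q] [/= nP nQ] sPQ].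
have [e [e0 [h1 h2]]] := nbhs_R_pos (filterI nP nQ).
rewrite add0r in h1; rewrite sub0r in h2.
have he1 : 0 < (e, e).1 * (e, e).2 by rewrite /=; nra.
have he2 : 0 < (-e, -e).1 * (-e, -e).2 by rewrite /=; nra.
have [_ [ea1 ea2]] := HV (ptX he1) (sPQ (e, e) h1).
have [[be1 be2] _] := HV (ptX he2) (sPQ (-e, -e) h2).
move: ea1 ea2 be1 be2 => /= ea1 ea2 be1 be2.
set S := (_ `\` _) in cpt.
have [r [r0 Hr]] : exists r, 0 < r /\ forall w, S w -> r < (sval w).2.
  apply: (@cover_pos snd S open_snd_gt cpt) => x [[bx xa] nint].
  rewrite ltNge; apply/negP => x2le; apply: nint.
  have oU := openI (open_pre (open_fst_lt (sval a).1)) (open_pre (open_snd_lt (sval a).2)).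
  apply: (filterS _ (open_nbhs_nbhs (conj oU _))).
    by move=> w [/= w1 w2]; split; apply: ltW.
  have x1le : (sval x).1 <= 0 by case: (Xspec x) => [h|[-> _]]; [nra|lra].
  by split => /=; lra.
have [t [t0 ta tr]] := min2 (lt_le_trans e0 ea2) r0.
have ht : 0 < ((sval a).1, t).1 * ((sval a).1, t).2 by rewrite /=; nra.
suff : S (ptX ht) by move=> /Hr /=; lra.
split.
  case: ba => ba1 ba2.
  by split; split => //=; lra.
move=> intw.
have [V' [nV' HV']] := nbhs_pull intw.
case: nV' => [[P' Q'] [/= nP' nQ'] sPQ'].
have [d [d0 [hd _]]] := nbhs_R_pos nP'.
have hd' : 0 < ((sval a).1 + d, t).1 * ((sval a).1 + d, t).2 by rewrite /=; nra.
have [/= + _] := HV' (ptX hd') (sPQ' (_, _) (conj hd (nbhs_singleton nQ'))).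
lra.
Qed.

Lemma seq_bound (Ds : seq (set (Xsp R))) :
  (forall D, D \in Ds -> compact D /\ forall w, D w -> 0 < (sval w).1) ->
  exists r, 0 < r /\ forall D, D \in Ds -> forall w, D w -> r < (sval w).1.
Proof.
elim: Ds => [|D Ds IH] H.
  by exists 1; split => // D; rewrite in_nil.
have [cD pD] := H D (mem_head _ _).
have [r1 [r10 Hr1]] := @cover_pos fst D open_fst_gt cD pD.
have [r2 [r20 Hr2]] : exists r, 0 < r /\ forall D, D \in Ds -> forall w, D w -> r < (sval w).1.
  by apply: IH => D' HD'; apply: H; rewrite in_cons HD' orbT.
have [t [t0 t1 t2]] := min2 r10 r20.
exists t; split => // D'; rewrite in_cons => /orP [/eqP -> | HD'] w Dw.
  exact: le_lt_trans t1 (Hr1 w Dw).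
exact: le_lt_trans t2 (Hr2 D' HD' w Dw).
Qed.

Lemma not_cont : ~ down_inv_continuous_at (@coord_le R) (theta R).
Proof.
have oO := open_pre (open_snd_lt 1).
move=> /(_ _ oO) [] /=; first lra.
move=> W [[WCX Wopen] [Wt Wimp]].
have [Os [Ds [oOs [cDs [[_ [meet miss] fbW]]]]]] := Wopen _ Wt.
have [r [r0 Hr]] : exists r, 0 < r /\ forall D, D \in Ds -> forall w, D w -> r < (sval w).1.
  apply: seq_bound => D HD; split; first exact: cDs.
  move=> w Dw; rewrite ltNge; apply/negP => w1le.
  have : (Defs.down (@coord_le R) (theta R) `&` D) w.
    split => //; rewrite /Defs.down /coord_le /=.
    by case: (Xspec w) => [h|[h1 h2]]; split; nra.
  by rewrite miss.
have hx : 0 < (r, 2 : R).1 * (r, 2 : R).2 by rewrite /=; nra.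
suff : fell_basic Os Ds (Defs.down (@coord_le R) (ptX hx)).
  by move=> /fbW /Wimp /=; lra.
split; first exact: closed_down.
split.
  move=> O HO; have [u [[u1 u2] Ou]] := meet O HO.
  by exists u; split => //; split => /=; move: u1 u2 => /= u1 u2; lra.
move=> D HD; rewrite -subset0 => w [[w1 _] Dw].
have := Hr D HD w Dw; move: w1 => /=; lra.
Qed.
End S.

Theorem mainTheorem3 (R : realType) :
  pots (@coord_le R) /\
  (~ upper_singular (@coord_le R) (theta R) /\
   ~ upper_compact_bounded (@coord_le R) (theta R)) /\
  ~ down_inv_continuous_at (@coord_le R) (theta R).
Proof.
split; first exact: pots_coord.
split; last exact: not_cont.
split; [exact: not_singular | exact: not_ucb].
Qed.
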